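(* Let $\mathbb{R}$ be the real line with the distance $d(x,y)=|x-y|$, and let $\mathcal C\subseteq\mathrm{age}(\mathbb{R})$ be an ideal. Then $\mathcal C$ has the $2$-amalgamation property if and only if there is a homogeneous metric space $\mathbb D$ with $\mathrm{age}(\mathbb D)=\mathcal C$. Moreover, if $\mathcal C$ contains at least one $3$-element metric space, then such a $\mathbb D$ can be taken to be $(G,d_{\restriction G})$ where $G$ is an additive subgroup of $\mathbb{R}$ and $d_{\restriction G}$ is the restriction of $d$.
   Context: Finite metric spaces are considered up to isometry and ordered by isometric embeddability; the age of a metric space is the set of isometry types of its finite subspaces; an ideal is a non-empty, downward closed, up-directed set of such isometry types. $\mathcal C$ has the $2$-amalgamation property if for all isometric embeddings $f_1:\mathbb A\to\mathbb A_1$, $f_2:\mathbb A\to\mathbb A_2$ between finite metric spaces with isometry types in $\mathcal C$ and $|\mathbb A|\le 2$, there exist a finite metric space $\mathbb B$ with type in $\mathcal C$ and isometric embeddings $g_1:\mathbb A_1\to\mathbb B$, $g_2:\mathbb A_2\to\mathbb B$ with $g_1\circ f_1=g_2\circ f_2$. A metric space $\mathbb D$ is homogeneous if every isometry between finite subspaces of $\mathbb D$ extends to an isometry of $\mathbb D$ onto itself. *)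

(* Defs.v *)
From Stdlib Require Import Reals Lra.
From Stdlib Require Import ProofIrrelevance.
From mathcomp Require Import all_boot.


Local Open Scope R_scope.

Record MetricSpace := {
  ms_carrier :> Type;
  ms_d : ms_carrier -> ms_carrier -> R;
  ms_d_eq0 : forall x y, ms_d x y = 0 <-> x = y;
  ms_d_sym : forall x y, ms_d x y = ms_d y x;
  ms_d_tri : forall x y z, ms_d x z <= ms_d x y + ms_d y z
}.

Record FMS := {
  fms_card : nat;
  fms_d : 'I_fms_card -> 'I_fms_card -> R;
  fms_d_eq0 : forall i j, fms_d i j = 0 <-> i = j;
  fms_d_sym : forall i j, fms_d i j = fms_d j i;
  fms_d_tri : forall i j k, fms_d i k <= fms_d i j + fms_d j k
}.

Definition fms_embedding (A B : FMS) (f : 'I_(fms_card A) -> 'I_(fms_card B)) : Prop :=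
  forall i j, fms_d B (f i) (f j) = fms_d A i j.

Definition fms_embeds (A B : FMS) : Prop :=
  exists f, fms_embedding A B f.

Definition fms_class := FMS -> Prop.

Definition is_ideal (C : fms_class) : Prop :=
  (exists A, C A) /\
  (forall A B, C B -> fms_embeds A B -> C A) /\
  (forall A B, C A -> C B -> exists E, C E /\ fms_embeds A E /\ fms_embeds B E).

Definition age (D : MetricSpace) : fms_class :=
  fun A => exists e : 'I_(fms_card A) -> D,
    forall i j, ms_d D (e i) (e j) = fms_d A i j.

Definition same_class (C1 C2 : fms_class) : Prop := forall A, C1 A <-> C2 A.

Definition subclass (C1 C2 : fms_class) : Prop := forall A, C1 A -> C2 A.

Definition two_amalgamation (C : fms_class) : Prop :=
  forall (A A1 A2 : FMS) (f1 : 'I_(fms_card A) -> 'I_(fms_card A1))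
         (f2 : 'I_(fms_card A) -> 'I_(fms_card A2)),
    C A -> C A1 -> C A2 -> (fms_card A <= 2)%N ->
    fms_embedding A A1 f1 -> fms_embedding A A2 f2 ->
    exists (B : FMS) (g1 : 'I_(fms_card A1) -> 'I_(fms_card B))
           (g2 : 'I_(fms_card A2) -> 'I_(fms_card B)),
      C B /\ fms_embedding A1 B g1 /\ fms_embedding A2 B g2 /\
      (forall i, g1 (f1 i) = g2 (f2 i)).

(** A finite partial isometry is given by a
    finite list s of points (its domain) and a map f that is
    distance-preserving on s; its image is f(s). *)
Definition homogeneous (D : MetricSpace) : Prop :=
  forall (s : list D) (f : D -> D),
    (forall x y, List.In x s -> List.In y s -> ms_d D (f x) (f y) = ms_d D x y) ->
    exists g : D -> D,
      (forall y : D, exists x, g x = y) /\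
      (forall x y, ms_d D (g x) (g y) = ms_d D x y) /\
      (forall x, List.In x s -> g x = f x).

Lemma Rline_eq0 (x y : R) : Rabs (x - y) = 0 <-> x = y.
Proof.
split => [H|->]; last by rewrite Rminus_diag Rabs_R0.
move: H; case: (Rcase_abs (x - y)) => h; [rewrite Rabs_left //|rewrite Rabs_right //]; lra.
Qed.

Lemma Rline_sym (x y : R) : Rabs (x - y) = Rabs (y - x).
Proof. exact: Rabs_minus_sym. Qed.

Lemma Rline_tri (x y z : R) : Rabs (x - z) <= Rabs (x - y) + Rabs (y - z).
Proof.
replace (x - z) with ((x - y) + (y - z)) by ring; exact: Rabs_triang.
Qed.

Definition Rline : MetricSpace :=
  {| ms_carrier := R; ms_d := fun x y => Rabs (x - y);
     ms_d_eq0 := Rline_eq0; ms_d_sym := Rline_sym; ms_d_tri := Rline_tri |}.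

Section Sub.
Variables (X : MetricSpace) (P : X -> Prop).
Definition sub_d (x y : {x : X | P x}) : R := ms_d X (proj1_sig x) (proj1_sig y).
Lemma sub_d_eq0 x y : sub_d x y = 0 <-> x = y.
Proof.
rewrite /sub_d ms_d_eq0; split => [|->] //.
case: x y => [x px] [y py] /= exy; subst y.
by rewrite (proof_irrelevance _ px py).
Qed.
End Sub.
Lemma sub_d_sym (X : MetricSpace) (P : X -> Prop) x y :
  sub_d X P x y = sub_d X P y x.
Proof. exact: ms_d_sym. Qed.
Lemma sub_d_tri (X : MetricSpace) (P : X -> Prop) x y z :
  sub_d X P x z <= sub_d X P x y + sub_d X P y z.
Proof. exact: ms_d_tri. Qed.

Definition subspace (X : MetricSpace) (P : X -> Prop) : MetricSpace :=
  {| ms_carrier := {x : X | P x}; ms_d := sub_d X P;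
     ms_d_eq0 := sub_d_eq0 X P; ms_d_sym := sub_d_sym X P;
     ms_d_tri := sub_d_tri X P |}.

Definition add_subgroup (G : R -> Prop) : Prop :=
  G 0 /\ (forall x y, G x -> G y -> G (x + y)) /\ (forall x, G x -> G (- x)).

(* Main.v *)
Require Import Defs.
From Stdlib Require Import Reals Lra ClassicalEpsilon ProofIrrelevance.
From mathcomp Require Import all_boot zify.

Local Open Scope R_scope.

Lemma Rabs_eq_cases {x y : R} : Rabs x = Rabs y -> x = y \/ x = - y.
Proof. unfold Rabs; destruct (Rcase_abs x); destruct (Rcase_abs y); lra. Qed.

Lemma Rabs_eq0 {x : R} : Rabs x = 0 -> x = 0.
Proof. unfold Rabs; destruct (Rcase_abs x); lra. Qed.

Lemma rigid (T : Type) (u v : T -> R) (i0 : T) :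
  (forall i j, Rabs (v i - v j) = Rabs (u i - u j)) ->
  exists s c, (s = 1 \/ s = -1) /\ forall i, v i = s * u i + c.
Proof.
move=> H.
destruct (classic (exists i1, u i1 <> u i0)) as [[i1 Hi1]|Hn].
- have [Hs|Hs] := Rabs_eq_cases (H i1 i0).
  + exists 1, (v i0 - u i0); split; first by left.
    move=> i.
    have [H1|H1] := Rabs_eq_cases (H i i0);
    have [H2|H2] := Rabs_eq_cases (H i i1); try lra; exfalso; apply Hi1; lra.
  + exists (-1), (v i0 + u i0); split; first by right.
    move=> i.
    have [H1|H1] := Rabs_eq_cases (H i i0);
    have [H2|H2] := Rabs_eq_cases (H i i1); try lra; exfalso; apply Hi1; lra.
- exists 1, (v i0 - u i0); split; first by left.
  move=> i.
  have Hu : u i = u i0 by apply: NNPP => Hne; apply: Hn; exists i.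
  have := H i i0; rewrite Hu Rminus_diag Rabs_R0 => /Rabs_eq0; lra.
Qed.

Lemma fof_eq0 (X : MetricSpace) n (w : 'I_n -> X) (Hw : injective w) i j :
  ms_d X (w i) (w j) = 0 <-> i = j.
Proof. rewrite ms_d_eq0; split => [/Hw|->] //. Qed.
Lemma fof_sym (X : MetricSpace) n (w : 'I_n -> X) i j :
  ms_d X (w i) (w j) = ms_d X (w j) (w i).
Proof. exact: ms_d_sym. Qed.
Lemma fof_tri (X : MetricSpace) n (w : 'I_n -> X) i j k :
  ms_d X (w i) (w k) <= ms_d X (w i) (w j) + ms_d X (w j) (w k).
Proof. exact: ms_d_tri. Qed.

Definition fms_of (X : MetricSpace) n (w : 'I_n -> X) (Hw : injective w) : FMS :=
  {| fms_card := n; fms_d := fun i j => ms_d X (w i) (w j);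
     fms_d_eq0 := @fof_eq0 X n w Hw; fms_d_sym := @fof_sym X n w; fms_d_tri := @fof_tri X n w |}.

Arguments fms_of {X n w} Hw.

Definition fms_ms (A : FMS) : MetricSpace :=
  {| ms_carrier := 'I_(fms_card A); ms_d := fms_d A;
     ms_d_eq0 := fms_d_eq0 A; ms_d_sym := fms_d_sym A; ms_d_tri := fms_d_tri A |}.

Lemma fms_d_ii (A : FMS) i : fms_d A i i = 0.
Proof. by apply/fms_d_eq0. Qed.

Lemma emb_inj {A B f} : fms_embedding A B f -> injective f.
Proof.
move=> Hf i j Hij; apply/(fms_d_eq0 A); rewrite -Hf Hij; exact: fms_d_ii.
Qed.

Lemma dedup (X : Type) n (v : 'I_n -> X) :
  exists m (w : 'I_m -> X), injective w /\ (forall k, exists l, w l = v k) /\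
    (forall l, exists k, v k = w l).
Proof.
elim: n v => [|n IH] v.
  exists 0%N, v; split; first by case.
  by split; case.
have [m [w' [Hi [H1 H2]]]] := IH (fun j => v (lift ord_max j)).
destruct (classic (exists l, w' l = v ord_max)) as [[l0 Hl0]|Hn].
- exists m, w'; split => //; split.
  + move=> k; case: (unliftP ord_max k) => [j ->|->]; last by exists l0.
    exact: H1.
  + move=> l; have [k Hk] := H2 l; by exists (lift ord_max k).
- exists m.+1, (fun l => match unlift ord_max l with Some j => w' j | None => v ord_max end).
  split; last split.
  + move=> l1 l2 /=.
    case: (unliftP ord_max l1) => [j1 ->|->]; case: (unliftP ord_max l2) => [j2 ->|->] //.
    * by move=> /Hi ->.
    * move=> E; exfalso; apply: Hn; by exists j1.
    * move=> E; exfalso; apply: Hn; by exists j2.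
  + move=> k; case: (unliftP ord_max k) => [j ->|->].
    * have [l Hl] := H1 j; exists (lift ord_max l); by rewrite liftK.
    * exists ord_max; by rewrite unlift_none.
  + move=> l; case: (unliftP ord_max l) => [j _|_].
    * have [k Hk] := H2 j; exists (lift ord_max k); by rewrite Hk.
    * by exists ord_max.
Qed.

Lemma In_mem (T : eqType) (x : T) (s : seq T) : x \in s -> List.In x s.
Proof.
elim: s => //= y s IH; rewrite inE => /orP [/eqP ->|/IH]; auto.
Qed.

Lemma In_enum (T : finType) (x : T) : List.In x (enum T).
Proof. apply: In_mem; by rewrite mem_enum. Qed.

Lemma fchoice (T : finType) (U : Type) (P : T -> U -> Prop) :
  (forall x, exists u, P x u) -> exists f : T -> U, forall x, P x (f x).
Proof. exact: (@fin_all_exists T (fun _ => U) P). Qed.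

Lemma split_l m n (i : 'I_m) : split (lshift n i) = inl i.
Proof. exact: (unsplitK (inl i)). Qed.
Lemma split_r m n (i : 'I_n) : split (rshift m i) = inr i.
Proof. exact: (unsplitK (inr i)). Qed.

Lemma homog_amalg (D : MetricSpace) (C : fms_class) :
  homogeneous D -> same_class (age D) C -> two_amalgamation C.
Proof.
move=> Hh Hs A A1 A2 f1 f2 CA CA1 CA2 _ Hf1 Hf2.
have [e1 He1] := (Hs A1).2 CA1.
have [e2 He2] := (Hs A2).2 CA2.
pose F (y : D) := match excluded_middle_informative (exists i, e2 (f2 i) = y) with
  | left H => e1 (f1 (proj1_sig (constructive_indefinite_description _ H)))
  | right _ => y end.
have FE : forall i, F (e2 (f2 i)) = e1 (f1 i).
  move=> i; rewrite /F; case: excluded_middle_informative => [H|H]; last first.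
    by exfalso; apply: H; exists i.
  case: constructive_indefinite_description => i' /= Hi'.
  have : fms_d A i' i = 0.
    by rewrite -Hf2 -He2 Hi'; apply/ms_d_eq0.
  by move/fms_d_eq0 ->.
pose s := List.map (fun i => e2 (f2 i)) (enum 'I_(fms_card A)).
have Hss : forall i, List.In (e2 (f2 i)) s.
  move=> i; apply: (List.in_map (fun i => e2 (f2 i))); exact: In_enum.
have [g [_ [Hg Hgs]]] : exists g : D -> D,
      (forall y : D, exists x, g x = y) /\
      (forall x y, ms_d D (g x) (g y) = ms_d D x y) /\
      (forall x, List.In x s -> g x = F x).
  apply: Hh => x y /List.in_map_iff [i [<- _]] /List.in_map_iff [j [<- _]].
  by rewrite !FE He1 Hf1 He2 Hf2.
pose v (k : 'I_(fms_card A1 + fms_card A2)) :=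
  match split k with inl i => e1 i | inr j => g (e2 j) end.
have [m [w [Hw [H1 H2]]]] := @dedup _ _ v.
have [g1 Hg1] : exists g1 : 'I_(fms_card A1) -> 'I_m, forall i, w (g1 i) = e1 i.
  apply: (@fchoice _ _ (fun i l => w l = e1 i)) => i; have [l Hl] := H1 (lshift _ i).
  by exists l; rewrite Hl /v split_l.
have [g2 Hg2] : exists g2 : 'I_(fms_card A2) -> 'I_m, forall i, w (g2 i) = g (e2 i).
  apply: (@fchoice _ _ (fun i l => w l = g (e2 i))) => i; have [l Hl] := H1 (rshift _ i).
  by exists l; rewrite Hl /v split_r.
exists (fms_of Hw), g1, g2; split; last split; last split.
- apply/(Hs _); by exists w.
- by move=> i j /=; rewrite !Hg1 He1.
- by move=> i j /=; rewrite !Hg2 Hg He2.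
- move=> i; apply: Hw; by rewrite Hg1 Hg2 Hgs // FE.
Qed.

Definition Real (C : fms_class) (A : FMS) (e : 'I_(fms_card A) -> R) :=
  C A /\ forall i j, Rabs (e i - e j) = fms_d A i j.
Definition img {n} (e : 'I_n -> R) x := exists i, e i = x.

Lemma real_of (C : fms_class) (HCR : subclass C (age Rline)) A :
  C A -> exists e, Real C A e.
Proof. move=> CA; have [e He] := HCR A CA; by exists e. Qed.

Lemma real_refl C A e c : Real C A e -> Real C A (fun i => c - e i).
Proof.
move=> [CA He]; split => // i j; rewrite -He -Rabs_Ropp; congr Rabs; ring.
Qed.

Lemma pull_C (C : fms_class) (Hid : is_ideal C) A m (u : 'I_m -> 'I_(fms_card A))
  (Hu : injective u) : C A -> C (@fms_of (fms_ms A) m u Hu).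
Proof.
move=> CA; case: Hid => [_ [Hd _]]; apply: (Hd _ A CA); by exists u.
Qed.

Definition pair2 {n} (p q : 'I_n) : 'I_2 -> 'I_n := fun i => if val i == 0%N then p else q.

Lemma pair2_inj n (p q : 'I_n) : p <> q -> injective (pair2 p q).
Proof.
move=> Hpq [[|[|//]] Hi] [[|[|//]] Hj]; rewrite /pair2 /= => E;
  try (by apply: val_inj); by exfalso; apply: Hpq.
Qed.

Lemma pm1_sq s : s = 1 \/ s = -1 -> s * s = 1.
Proof. case=> ->; ring. Qed.

Lemma amalg2 (C : fms_class) (Hid : is_ideal C) (HCR : subclass C (age Rline))
  (Ham : two_amalgamation C) A1 e1 A2 e2 p q p' q' :
  Real C A1 e1 -> Real C A2 e2 -> e1 p = e2 p' -> e1 q = e2 q' -> e1 p <> e1 q ->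
  exists B h, Real C B h /\ (forall i, img h (e1 i)) /\ (forall i, img h (e2 i)).
Proof.
move=> [CA1 He1] [CA2 He2] Ep Eq Npq.
have Hpq : p <> q by move=> E; apply: Npq; rewrite E.
pose A := @fms_of (fms_ms A1) 2 (pair2 p q) (@pair2_inj _ p q Hpq).
have CA : C A by apply: pull_C.
have E2 : forall i, e2 (pair2 p' q' i) = e1 (pair2 p q i).
  by move=> i; rewrite /pair2; case: (val i == 0%N).
have [B [g1 [g2 [CB [Hg1 [Hg2 Hc]]]]]] :
  exists (B : FMS) (g1 : 'I_(fms_card A1) -> 'I_(fms_card B))
           (g2 : 'I_(fms_card A2) -> 'I_(fms_card B)),
      C B /\ fms_embedding A1 B g1 /\ fms_embedding A2 B g2 /\
      (forall i, g1 (pair2 p q i) = g2 (pair2 p' q' i)).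
  apply: (Ham A A1 A2) => //.
  move=> i j; by rewrite -He2 !E2 He1.
have [h0 [_ Hh0]] := @real_of C HCR B CB.
have [s1 [c1 [Hs1 R1]]] := @rigid _ e1 (fun i => h0 (g1 i)) p
   ltac:(by move=> i j; rewrite Hh0 Hg1 He1).
have [s2 [c2 [Hs2 R2]]] := @rigid _ e2 (fun i => h0 (g2 i)) p'
   ltac:(by move=> i j; rewrite Hh0 Hg2 He2).
have X0 := Hc ord0; have X1 := Hc ord_max.
rewrite /pair2 /= in X0 X1.
have Y0 := R1 p; have Y0' := R2 p'; have Y1 := R1 q; have Y1' := R2 q'.
rewrite X0 in Y0; rewrite X1 in Y1.
have Hss : s1 = s2.
  case: Hs1 => E1; case: Hs2 => E2'; rewrite E1 E2' in Y0 Y0' Y1 Y1' *; try lra;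
  exfalso; apply: Npq; lra.
subst s2.
have Hcc : c1 = c2 by rewrite -Ep in Y0'; lra.
subst c2.
have S1 := @pm1_sq s1 Hs1.
exists B, (fun j => s1 * (h0 j - c1)); split; last split.
- split => // i j; rewrite -Hh0.
  case: Hs1 => ->; last (rewrite -Rabs_Ropp); congr Rabs; ring.
- move=> i; exists (g1 i); rewrite R1.
  transitivity (s1 * s1 * e1 i); [ring|rewrite S1; ring].
- move=> i; exists (g2 i); rewrite R2.
  transitivity (s1 * s1 * e2 i); [ring|rewrite S1; ring].
Qed.

Lemma img_trans {n m} {e : 'I_n -> R} {h : 'I_m -> R} {x} :
  (forall i, img h (e i)) -> img e x -> img h x.
Proof. by move=> H [i <-]. Qed.

Lemma reflect_step (C : fms_class) (Hid : is_ideal C) (HCR : subclass C (age Rline))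
  (Ham : two_amalgamation C) A e ia ib :
  Real C A e -> e ia <> e ib ->
  exists B h, Real C B h /\ (forall i, img h (e i)) /\
    (forall i, img h (e ia + e ib - e i)).
Proof.
move=> HR Hn.
have HR2 := @real_refl C A e (e ia + e ib) HR.
have [B [h [HB [H1 H2]]]] := @amalg2 C Hid HCR Ham A e A (fun i => e ia + e ib - e i) ia ib ib ia HR HR2
  ltac:(simpl; ring) ltac:(simpl; ring) Hn.
by exists B, h.
Qed.

Lemma addpt (C : fms_class) (Hid : is_ideal C) (HCR : subclass C (age Rline))
  (Ham : two_amalgamation C) A e r p q z :
  Real C A e -> e r <> e p -> e r <> e q ->
  exists B h, Real C B h /\ (forall i, img h (e i)) /\ img h (e z + e q - e p).
Proof.
move=> HR Hrp Hrq.
have [B1 [h1 [HB1 [I1 J1]]]] := @reflect_step C Hid HCR Ham A e p r HR (nesym Hrp).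
have [q1 Hq1] := I1 q; have [r1 Hr1] := I1 r; have [z1 Hz1] := J1 z.
have [B2 [h2 [HB2 [I2 J2]]]] := @reflect_step C Hid HCR Ham B1 h1 q1 r1 HB1
  ltac:(by rewrite Hq1 Hr1; apply: nesym).
exists B2, h2; split => //; split.
- move=> i; exact: (img_trans I2 (I1 i)).
- have := J2 z1; rewrite Hq1 Hr1 Hz1.
  by have -> : e q + e r - (e p + e r - e z) = e z + e q - e p by ring.
Qed.

Lemma pick3 (a b c u v : R) : a <> b -> b <> c -> a <> c ->
  exists r, (r = a \/ r = b \/ r = c) /\ r <> u /\ r <> v.
Proof.
move=> Hab Hbc Hac.
destruct (Req_dec a u); destruct (Req_dec a v);
destruct (Req_dec b u); destruct (Req_dec b v);
destruct (Req_dec c u); destruct (Req_dec c v);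
first [ exists a; split; [left; reflexivity| split; assumption]
      | exists b; split; [right; left; reflexivity| split; assumption]
      | exists c; split; [right; right; reflexivity| split; assumption]
      | exfalso; congruence ].
Qed.

Definition Big {n} (e : 'I_n -> R) := exists i j k, e i <> e j /\ e j <> e k /\ e i <> e k.

Lemma Big_sub {n m} {e : 'I_n -> R} {h : 'I_m -> R} :
  Big e -> (forall i, img h (e i)) -> Big h.
Proof.
move=> [i [j [k [H1 [H2 H3]]]]] Hs.
have [i' Hi] := Hs i; have [j' Hj] := Hs j; have [k' Hk] := Hs k.
exists i', j', k'; rewrite Hi Hj Hk; auto.
Qed.

Lemma addpt_big (C : fms_class) (Hid : is_ideal C) (HCR : subclass C (age Rline))
  (Ham : two_amalgamation C) A e p q z :
  Real C A e -> Big e ->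
  exists B h, Real C B h /\ (forall i, img h (e i)) /\ img h (e z + e q - e p).
Proof.
move=> HR [i [j [k [H1 [H2 H3]]]]].
have [r [Hr [Hru Hrv]]] := @pick3 (e i) (e j) (e k) (e p) (e q) H1 H2 H3.
have [l [El _]] : exists l, e l = r /\ True.
  case: Hr => [->|[->|->]]; [by exists i| by exists j| by exists k].
rewrite -El in Hru Hrv.
exact: (@addpt C Hid HCR Ham A e l p q z HR Hru Hrv).
Qed.

Lemma addpts (C : fms_class) (Hid : is_ideal C) (HCR : subclass C (age Rline))
  (Ham : two_amalgamation C) A e z0 n (w : 'I_n -> R) :
  Real C A e -> Big e -> (forall k, exists p q, w k = e q - e p) ->
  exists B h, Real C B h /\ (forall i, img h (e i)) /\
    (forall k, img h (e z0 + w k)).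
Proof.
move=> HR HB; elim: n w => [|n IH] w Hw.
  exists A, e; split => //; split; [by move=> i; exists i| by case].
have [B1 [h1 [HB1 [I1 J1]]]] := IH (fun k => w (lift ord_max k)) (fun k => Hw _).
have [p [q Hpq]] := Hw ord_max.
have [z1 Hz1] := I1 z0; have [p1 Hp1] := I1 p; have [q1 Hq1] := I1 q.
have [B2 [h2 [HB2 [I2 J2]]]] := @addpt_big C Hid HCR Ham B1 h1 p1 q1 z1 HB1
  (Big_sub HB I1).
exists B2, h2; split => //; split.
- move=> i; exact: (img_trans I2 (I1 i)).
- move=> k; case: (unliftP ord_max k) => [j ->|->].
  + exact: (img_trans I2 (J1 j)).
  + rewrite Hpq; move: J2; rewrite Hz1 Hp1 Hq1.
    by have -> : e z0 + e q - e p = e z0 + (e q - e p) by ring.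
Qed.

Definition Gset (C : fms_class) (x : R) := exists A i j, C A /\ Rabs x = fms_d A i j.
Definition BigF (E : FMS) := exists i j k : 'I_(fms_card E), i <> j /\ j <> k /\ i <> k.

Lemma BigF3 A : fms_card A = 3%N -> BigF A.
Proof.
move=> H.
have h0 : (0 < fms_card A)%N by rewrite H.
have h1 : (1 < fms_card A)%N by rewrite H.
have h2 : (2 < fms_card A)%N by rewrite H.
exists (Ordinal h0), (Ordinal h1), (Ordinal h2); split; last split; by move/(f_equal val).
Qed.

Lemma commonE (C : fms_class) (Hid : is_ideal C) (T : FMS) (CT : C T) (BT : BigF T)
  n (w : 'I_n -> R) : (forall k, Gset C (w k)) ->
  exists E, C E /\ BigF E /\ forall k, exists i j, Rabs (w k) = fms_d E i j.
Proof.
elim: n w => [|n IH] w Hw.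
  by exists T; split => //; split => //; case.
have [E1 [CE1 [BE1 H1]]] := IH (fun k => w (lift ord_max k)) (fun k => Hw _).
have [A' [a [b [CA' Hab]]]] := Hw ord_max.
case: Hid => [_ [_ Hdir]].
have [E2 [CE2 [[f1 Hf1] [f2 Hf2]]]] := Hdir E1 A' CE1 CA'.
exists E2; split => //; split.
- case: BE1 => [i [j [k [Hij [Hjk Hik]]]]].
  have Hi := emb_inj Hf1.
  exists (f1 i), (f1 j), (f1 k); split; last split; move/Hi; auto.
- move=> k; case: (unliftP ord_max k) => [j ->|->].
  + have [i1 [j1 E]] := H1 j; exists (f1 i1), (f1 j1); by rewrite Hf1.
  + exists (f2 a), (f2 b); by rewrite Hf2.
Qed.

Lemma bigE (C : fms_class) (HCR : subclass C (age Rline)) E :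
  C E -> BigF E -> exists h, Real C E h /\ Big h.
Proof.
move=> CE [i [j [k [Hij [Hjk Hik]]]]].
have [h Hh] := @real_of C HCR E CE.
have Hinj : forall a b, h a = h b -> a = b.
  move=> a b Eab; apply/(fms_d_eq0 E); case: Hh => _ Hh; rewrite -Hh Eab.
  by rewrite Rminus_diag Rabs_R0.
exists h; split => //; exists i, j, k; split; last split; move/Hinj; auto.
Qed.

Lemma diff_of (C : fms_class) E h x i j :
  Real C E h -> Rabs x = fms_d E i j -> exists p q, x = h q - h p.
Proof.
move=> [_ Hh]; rewrite -Hh => /Rabs_eq_cases [->|->].
  by exists j, i.
by exists i, j; ring.
Qed.

Lemma G_age (C : fms_class) (Hid : is_ideal C) (HCR : subclass C (age Rline))
  (Ham : two_amalgamation C) (T : FMS) (CT : C T) (BT : BigF T)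
  A (u : 'I_(fms_card A) -> R) :
  (forall i, Gset C (u i)) -> (forall i j, Rabs (u i - u j) = fms_d A i j) -> C A.
Proof.
move=> HG Hu.
have [E [CE [BE HE]]] := @commonE C Hid T CT BT _ u HG.
have [h [HR HB]] := @bigE C HCR E CE BE.
have Hd : forall k, exists p q, u k = h q - h p.
  move=> k; have [i [j Hij]] := HE k; exact: (@diff_of C E h _ i j HR Hij).
have [z0 _] := HB.
have [B [h' [[CB HB'] [_ J]]]] := @addpts C Hid HCR Ham E h z0 _ u HR HB Hd.
have [g Hg] := @fchoice _ _ (fun i l => h' l = h z0 + u i) J.
case: Hid => [_ [Hd' _]]; apply: (Hd' A B CB); exists g => i j.
rewrite -HB' !Hg -Hu; congr Rabs; ring.
Qed.

Lemma G_add (C : fms_class) (Hid : is_ideal C) (HCR : subclass C (age Rline))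
  (Ham : two_amalgamation C) (T : FMS) (CT : C T) (BT : BigF T) x y :
  Gset C x -> Gset C y -> Gset C (x + y).
Proof.
move=> Hx Hy.
pose w (k : 'I_2) := if val k == 0%N then x else y.
have HG : forall k, Gset C (w k) by move=> k; rewrite /w; case: (val k == 0%N).
have [E [CE [BE HE]]] := @commonE C Hid T CT BT _ w HG.
have [h [HR HB]] := @bigE C HCR E CE BE.
have [i [j Hij]] := HE ord0; have [i' [j' Hij']] := HE ord_max.
have [p [q Ex]] := @diff_of C E h _ i j HR Hij.
have [p' [q' Ey]] := @diff_of C E h _ i' j' HR Hij'.
rewrite /w /= in Ex Ey.
have [B [h2 [[CB HB2] [I2 J2]]]] := @addpt_big C Hid HCR Ham E h q' p' p HR HB.
have [a Ha] := I2 q; have [b Hb] := J2.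
exists B, a, b; split => //; rewrite -HB2 Ha Hb Ex Ey; congr Rabs; ring.
Qed.

Lemma sig_eq (P : R -> Prop) (a b : {x : R | P x}) : proj1_sig a = proj1_sig b -> a = b.
Proof.
case: a b => [a pa] [b pb] /= E; subst b; f_equal; apply: proof_irrelevance.
Qed.

Lemma sub_dE (P : R -> Prop) (a b : subspace Rline P) :
  ms_d (subspace Rline P) a b = Rabs (proj1_sig a - proj1_sig b).
Proof. by []. Qed.

Lemma sub_age (P : R -> Prop) A : age (subspace Rline P) A <->
  exists u : 'I_(fms_card A) -> R, (forall i, P (u i)) /\
    forall i j, Rabs (u i - u j) = fms_d A i j.
Proof.
split.
- move=> [e He]; exists (fun i => proj1_sig (e i)); split.
  + move=> i; exact: proj2_sig (e i).
  + move=> i j; by rewrite -He.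
- move=> [u [Hu Hd]]; exists (fun i => exist P (u i) (Hu i)) => i j.
  by rewrite sub_dE /= Hd.
Qed.

Lemma homog_group (P : R -> Prop) : add_subgroup P -> homogeneous (subspace Rline P).
Proof.
move=> [P0 [PD PN]] s f Hf.
case: s Hf => [|x0 s'] Hf.
  exists id; split; first by move=> y; exists y.
  by split.
pose T := {x | List.In x (x0 :: s')}.
have [sg [c [Hs Hr]]] := @rigid T (fun t => proj1_sig (proj1_sig t))
   (fun t => proj1_sig (f (proj1_sig t))) (exist _ x0 (List.in_eq x0 s'))
   ltac:(move=> [a Ha] [b Hb] /=; by rewrite -!sub_dE Hf).
have Psg : forall y, P y -> P (sg * y).
  move=> y Hy; case: Hs => ->; [by rewrite Rmult_1_l|].
  have -> : -1 * y = - y by ring.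
  exact: PN.
have Pc : P c.
  have := Hr (exist _ x0 (List.in_eq x0 s')); rewrite /= => E.
  have -> : c = proj1_sig (f x0) + - (sg * proj1_sig x0).
    have E' : proj1_sig (f x0) = sg * proj1_sig x0 + c := E.
    lra.
  apply: PD; first exact: proj2_sig.
  apply: PN; apply: Psg; exact: proj2_sig.
have S1 := @pm1_sq sg Hs.
pose g (y : subspace Rline P) : subspace Rline P :=
  exist P (sg * proj1_sig y + c) (PD _ _ (Psg _ (proj2_sig y)) Pc).
exists g; split; last split.
- move=> y.
  have Hy : P (sg * (proj1_sig y + - c)) by apply Psg; apply PD; [exact: proj2_sig| exact: PN].
  exists (exist P _ Hy); apply: sig_eq => /=.
  set yy := proj1_sig y.
  transitivity (sg * sg * yy + (1 - sg * sg) * c); first ring.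
  rewrite S1; ring.
- move=> a b; rewrite !sub_dE /=.
  set aa := proj1_sig a; set bb := proj1_sig b.
  case: Hs => ->; last rewrite -Rabs_Ropp; congr Rabs; ring.
- move=> x Hx; apply: sig_eq => /=.
  by have := Hr (exist _ x Hx).
Qed.

Lemma G_group (C : fms_class) (Hid : is_ideal C) (HCR : subclass C (age Rline))
  (Ham : two_amalgamation C) (T : FMS) (CT : C T) (BT : BigF T) :
  add_subgroup (Gset C).
Proof.
split; last split.
- case: BT => [i _]; exists T, i, i; split => //; by rewrite Rabs_R0 fms_d_ii.
- exact: (@G_add C Hid HCR Ham T CT BT).
- move=> x [A [i [j [CA H]]]]; exists A, i, j; by rewrite Rabs_Ropp.
Qed.

Definition o0 {n} (i : 'I_n) : 'I_n := Ordinal (leq_ltn_trans (leq0n i) (ltn_ord i)).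

Lemma o0_eq {n} (i j : 'I_n) : o0 i = o0 j.
Proof. exact: val_inj. Qed.

Lemma G_same (C : fms_class) (Hid : is_ideal C) (HCR : subclass C (age Rline))
  (Ham : two_amalgamation C) (T : FMS) (CT : C T) (BT : BigF T) :
  same_class (age (subspace Rline (Gset C))) C.
Proof.
move=> A; split.
- move/sub_age => [u [Hu Hd]]; exact: (@G_age C Hid HCR Ham T CT BT A u Hu Hd).
- move=> CA; have [e [_ He]] := @real_of C HCR A CA.
  apply/sub_age; exists (fun i => e i - e (o0 i)); split.
  + move=> i; exists A, i, (o0 i); split => //.
  + move=> i j; rewrite (o0_eq j i) -He; congr Rabs; ring.
Qed.

Lemma ord2_cases n (Hn : (n <= 2)%N) (i j l : 'I_n) : i <> j -> l = i \/ l = j.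
Proof.
move=> Hij.
have Hv : nat_of_ord i <> nat_of_ord j by move=> E; apply: Hij; apply: val_inj.
have Hi := ltn_ord i; have Hj := ltn_ord j; have Hl := ltn_ord l.
have : (nat_of_ord l = nat_of_ord i \/ nat_of_ord l = nat_of_ord j) by lia.
case=> E; [left|right]; exact: val_inj.
Qed.

Lemma widen_inj n m (H : (n <= m)%N) : injective (widen_ord H).
Proof. move=> i j /(f_equal val) /= E; exact: val_inj. Qed.

Lemma no3_le2 (C : fms_class) (Hid : is_ideal C) :
  ~ (exists A, C A /\ fms_card A = 3%N) -> forall A, C A -> (fms_card A <= 2)%N.
Proof.
move=> Hn A CA; case: (leqP (fms_card A) 2) => // H.
exfalso; apply: Hn.
exists (@fms_of (fms_ms A) 3 (widen_ord H) (@widen_inj _ _ H)); split => //.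
exact: pull_C.
Qed.

Lemma max_member (C : fms_class) (Hid : is_ideal C) :
  (forall A, C A -> (fms_card A <= 2)%N) ->
  exists M, C M /\ forall A, C A -> (fms_card A <= fms_card M)%N.
Proof.
move=> Hle.
destruct (classic (exists M, C M /\ fms_card M = 2%N)) as [[M [CM HM]]|N2].
  by exists M; split => // A /Hle; rewrite HM.
destruct (classic (exists M, C M /\ fms_card M = 1%N)) as [[M [CM HM]]|N1].
  exists M; split => // A CA; rewrite HM.
  have := Hle A CA; have : fms_card A <> 2%N by move=> E; apply: N2; exists A.
  lia.
case: Hid => [[M CM] _]; exists M; split => // A CA.
have := Hle A CA; have : fms_card A <> 2%N by move=> E; apply: N2; exists A.
have : fms_card A <> 1%N by move=> E; apply: N1; exists A.
lia.
Qed.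

Lemma small_same (C : fms_class) (Hid : is_ideal C) (HCR : subclass C (age Rline))
  M e : Real C M e -> (forall A, C A -> (fms_card A <= fms_card M)%N) ->
  same_class (age (subspace Rline (img e))) C.
Proof.
move=> [CM He] Hmax A; split.
- move/sub_age => [u [Hu Hd]].
  have [m Hm] := @fchoice _ _ (fun i l => e l = u i) Hu.
  case: Hid => [_ [Hdown _]]; apply: (Hdown A M CM); exists m => i j.
  by rewrite -He !Hm Hd.
- move=> CA; case: Hid => [_ [_ Hdir]].
  have [E [CE [[phi Hphi] [psi Hpsi]]]] := Hdir A M CA CM.
  have Hon := @inj_card_onto _ _ psi (emb_inj Hpsi)
    ltac:(by rewrite !card_ord; apply: Hmax).
  have [m Hm] := @fchoice _ _ (fun i l => psi l = phi i)
    ltac:(move=> i; have /codomP [x ->] := Hon (phi i); by exists x).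
  apply/sub_age; exists (fun i => e (m i)); split.
  + move=> i; by exists (m i).
  + move=> i j; by rewrite He -Hpsi !Hm Hphi.
Qed.

Lemma small_homog (C : fms_class) M e : Real C M e -> (fms_card M <= 2)%N ->
  homogeneous (subspace Rline (img e)).
Proof.
move=> [CM He] H2 s f Hf.
have Hinj : forall a b, e a = e b -> a = b.
  move=> a b Eab; apply/(fms_d_eq0 M); rewrite -He Eab.
  by rewrite Rminus_diag Rabs_R0.
destruct (classic (exists x, List.In x s /\ f x <> x)) as [[x [Hx Hfx]]|Hn]; last first.
  exists id; split; first by move=> y; exists y.
  split => // z Hz; apply: NNPP => E; apply: Hn; exists z; split => //; auto.
set a := proj1_sig x; set b := proj1_sig (f x).
have Hab : a <> b by move=> E; apply: Hfx; apply: sig_eq; rewrite -/a -/b E.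
have key : forall y : subspace Rline (img e), proj1_sig y = a \/ proj1_sig y = b.
  move=> y.
  have [l El] := proj2_sig y; have [i Ei] := proj2_sig x; have [j Ej] := proj2_sig (f x).
  have Hij : i <> j by move=> E; apply: Hab; rewrite /a /b -Ei -Ej E.
  case: (@ord2_cases _ H2 i j l Hij) => E; rewrite E in El; [left; rewrite -El Ei //| right; rewrite -El Ej //].
have Pg : forall y : subspace Rline (img e), img e (a + b - proj1_sig y).
  move=> y; case: (key y) => ->.
  - have -> : a + b - a = b by ring. exact: (proj2_sig (f x)).
  - have -> : a + b - b = a by ring. exact: (proj2_sig x).
pose g (y : subspace Rline (img e)) : subspace Rline (img e) := exist _ _ (Pg y).
exists g; split; last split.
- move=> y; exists (g y); apply: sig_eq; rewrite /g /=; ring.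
- move=> y z; rewrite !sub_dE /g /= -Rabs_Ropp; congr Rabs; ring.
- move=> z Hz; apply: sig_eq; rewrite /g /=.
  case: (key z) => Ez.
  + have -> : z = x by apply: sig_eq; rewrite Ez.
    rewrite -/a -/b; ring.
  + rewrite Ez; case: (key (f z)) => Efz; first by rewrite Efz; ring.
    exfalso.
    have := Hf z x Hz Hx; rewrite !sub_dE Efz Ez -/a -/b Rminus_diag Rabs_R0.
    move=> /esym /Rabs_eq0 E; apply: Hab; lra.
Qed.

Local Close Scope R_scope.

Theorem lemma4 (C : fms_class) :
  is_ideal C -> subclass C (age Rline) ->
  (two_amalgamation C <->
     exists D : MetricSpace, homogeneous D /\ same_class (age D) C) /\
  ((exists A : FMS, C A /\ fms_card A = 3) -> two_amalgamation C ->
     exists G : R -> Prop, add_subgroup G /\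
       homogeneous (subspace Rline G) /\ same_class (age (subspace Rline G)) C).
Proof.
move=> Hid HCR.
have Part2 : (exists A : FMS, C A /\ fms_card A = 3) -> two_amalgamation C ->
     exists G : R -> Prop, add_subgroup G /\
       homogeneous (subspace Rline G) /\ same_class (age (subspace Rline G)) C.
  move=> [T [CT H3]] Ham.
  have BT := @BigF3 T H3.
  exists (Gset C); split; first exact: (@G_group C Hid HCR Ham T CT BT).
  split; last exact: (@G_same C Hid HCR Ham T CT BT).
  apply: homog_group; exact: (@G_group C Hid HCR Ham T CT BT).
split => //; split.
- move=> Ham.
  destruct (classic (exists A : FMS, C A /\ fms_card A = 3)) as [H3|N3].
    have [G [_ [HG1 HG2]]] := Part2 H3 Ham.
    by exists (subspace Rline G).
  have Hle := @no3_le2 C Hid N3.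
  have [M [CM Hmax]] := @max_member C Hid Hle.
  have [e He] := @real_of C HCR M CM.
  exists (subspace Rline (img e)); split.
  + exact: (@small_homog C M e He (Hle M CM)).
  + exact: (@small_same C Hid HCR M e He Hmax).
- move=> [D [Hh Hs]]; exact: (@homog_amalg D C Hh Hs).
Qed.
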